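(* Let $\mathcal{A}$ be a non-unital normed algebra possessing an approximate identity, and let $\mathcal{I}_r(\mathcal{A})$ denote the set of all closed proper right ideals of $\mathcal{A}$. Then $$\mathrm{AppInv}_r(\mathcal{A})=\mathcal{A}\setminus\bigcup_{I\in\mathcal{I}_r(\mathcal{A})} I .$$
   Context: An approximate identity in a normed algebra $\mathcal{A}$ is a net $(e_j)_{j\in J}$ in $\mathcal{A}$ such that $\lim_{j} e_j y=\lim_j y e_j=y$ for every $y\in\mathcal{A}$. An element $x\in\mathcal{A}$ is approximately right invertible if there is a net $(r_j)_{j\in J}$ in $\mathcal{A}$ such that $(xr_j)_{j\in J}$ is an approximate identity in $\mathcal{A}$. $\mathrm{AppInv}_r(\mathcal{A})$ denotes the set of approximately right invertible elements of $\mathcal{A}$. *)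

(* Defs.v *)
From HB Require Import structures.
From mathcomp Require Import all_boot all_order all_algebra.
From mathcomp Require Import all_classical all_reals all_analysis.
Set Implicit Arguments. Unset Strict Implicit. Unset Printing Implicit Defensive.
Import Order.TTheory GRing.Theory Num.Theory.
Import numFieldNormedType.Exports.
Local Open Scope classical_set_scope.
Local Open Scope ring_scope.

Definition normed_algebra (K : numFieldType) (V : normedModType K)
  (mul : V -> V -> V) : Prop :=
  [/\ (forall x y z, mul x (mul y z) = mul (mul x y) z),
      (forall (a : K) x y z, mul (a *: x + y) z = a *: mul x z + mul y z),
      (forall (a : K) x y z, mul z (a *: x + y) = a *: mul z x + mul z y) &
      (forall x y, `|mul x y| <= `|x| * `|y|)].

Definition directed (J : Type) (le : J -> J -> Prop) : Prop :=
  [/\ (forall i, le i i),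
      (forall i j k, le i j -> le j k -> le i k),
      inhabited J &
      (forall i j, exists k, le i k /\ le j k)].

Definition net_lim (K : numFieldType) (V : normedModType K)
  (J : Type) (le : J -> J -> Prop) (u : J -> V) (l : V) : Prop :=
  forall eps : K, 0 < eps -> exists j0, forall j, le j0 j -> `|u j - l| < eps.

Definition approx_identity (K : numFieldType) (V : normedModType K)
  (mul : V -> V -> V) (J : Type) (le : J -> J -> Prop) (e : J -> V) : Prop :=
  forall y, net_lim le (fun j => mul (e j) y) y /\
            net_lim le (fun j => mul y (e j)) y.

Definition has_approx_identity (K : numFieldType) (V : normedModType K)
  (mul : V -> V -> V) : Prop :=
  exists (J : Type) (le : J -> J -> Prop) (e : J -> V),
    directed le /\ approx_identity mul le e.

Definition AppInv_r (K : numFieldType) (V : normedModType K)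
  (mul : V -> V -> V) : set V :=
  [set x | exists (J : Type) (le : J -> J -> Prop) (r : J -> V),
      directed le /\ approx_identity mul le (fun j => mul x (r j))].

Definition right_ideal (K : numFieldType) (V : normedModType K)
  (mul : V -> V -> V) (I : set V) : Prop :=
  [/\ I 0,
      (forall x y, I x -> I y -> I (x + y)),
      (forall (a : K) x, I x -> I (a *: x)) &
      (forall x a, I x -> I (mul x a))].

Definition closed_proper_right_ideals (K : numFieldType) (V : normedModType K)
  (mul : V -> V -> V) : set (set V) :=
  [set I | right_ideal mul I /\ closed I /\ I != setT].

(* Main.v *)
Require Import Defs.
From HB Require Import structures.
From mathcomp Require Import all_boot all_order all_algebra.
From mathcomp Require Import all_classical all_reals all_analysis.
Import Order.TTheory GRing.Theory Num.Theory.
Import numFieldNormedType.Exports.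
Local Open Scope classical_set_scope.
Local Open Scope ring_scope.

Lemma closed_approx (K : numFieldType) (V : normedModType K) (I : set V) (y : V) :
  closed I -> (forall eps : K, 0 < eps -> exists z, I z /\ `|y - z| < eps) -> I y.
Proof.
move=> cI H; apply: cI => B /nbhs_ex [d Hd].
have [z [Iz yz]] := H d%:num (gt0 d).
exists z; split => //; apply: Hd; rewrite -ball_normE /ball_ /=. exact: yz.
Qed.

Lemma approx_closed (K : numFieldType) (V : normedModType K) (I : set V) :
  (forall y, (forall eps : K, 0 < eps -> exists z, I z /\ `|y - z| < eps) -> I y) -> closed I.
Proof.
move=> H y cy; apply: H => eps e0.
have [z [Iz bz]] := cy _ (nbhsx_ballx y eps e0).
exists z; split => //; move: bz; rewrite -ball_normE /ball_ /=. done.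
Qed.

Lemma small_bnd (K : numFieldType) (a u eps : K) :
  0 <= a -> 0 <= u -> u < eps / (a + 1) -> u * a < eps.
Proof.
move=> a0 u0 h.
have a1 : 0 < a + 1 by rewrite ltr_wpDl.
apply: (le_lt_trans (y := u * (a + 1))).
  by rewrite ler_wpM2l // lerDl.
by rewrite -(divfK (lt0r_neq0 a1) eps) ltr_pM2r.
Qed.

Lemma half_gt0 (K : numFieldType) (e : K) : 0 < e -> 0 < e / 2.
Proof. by move=> e0; rewrite divr_gt0. Qed.

Lemma halves (K : numFieldType) (e a b : K) : a < e / 2 -> b < e / 2 -> a + b < e.
Proof. by move=> ha hb; rewrite [e]splitr; apply: ltrD. Qed.

Arguments closed_approx {K V I y}.
Arguments approx_closed {K V I}.
Arguments small_bnd {K a u eps}.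
Arguments half_gt0 {K e}.
Arguments halves {K e a b}.
Section Alg.
Lemma mul_lemmas (K : numFieldType) (V : normedModType K) (mul : V -> V -> V) :
  normed_algebra mul ->
  (forall z, mul 0 z = 0) /\ (forall z, mul z 0 = 0) /\
      (forall x y z, mul (x - y) z = mul x z - mul y z) /\
      (forall x y z, mul z (x - y) = mul z x - mul z y) /\
      (forall x y z, mul (x + y) z = mul x z + mul y z) /\
      (forall x y z, mul z (x + y) = mul z x + mul z y) /\
      (forall (a : K) x z, mul z (a *: x) = a *: mul z x).
Proof.
case=> _ ladd radd _.
have m0 : forall z, mul 0 z = 0.
  move=> z; have := ladd 1 0 0 z; rewrite !scale1r addr0 => h.
  have : mul 0 z - mul 0 z = mul 0 z + mul 0 z - mul 0 z by rewrite -h.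
  by rewrite subrr addrK.
have m0' : forall z, mul z 0 = 0.
  move=> z; have := radd 1 0 0 z; rewrite !scale1r addr0 => h.
  have : mul z 0 - mul z 0 = mul z 0 + mul z 0 - mul z 0 by rewrite -h.
  by rewrite subrr addrK.
split => //; split => //.
split.
- move=> x y z; have := ladd (-1) y x z; rewrite !scaleN1r => h.
  by rewrite addrC h addrC.
split.
- move=> x y z; have := radd (-1) y x z; rewrite !scaleN1r => h.
  by rewrite addrC h addrC.
split.
- by move=> x y z; have := ladd 1 x y z; rewrite !scale1r.
split.
- by move=> x y z; have := radd 1 x y z; rewrite !scale1r.
- by move=> a x z; have := radd a x 0 z; rewrite addr0 m0' addr0.
Qed.
End Alg.

Theorem theorem2p10 (K : numFieldType) (V : normedModType K)
  (mul : V -> V -> V) (hA : normed_algebra mul)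
  (happ : has_approx_identity mul) :
  AppInv_r mul = setT `\` \bigcup_(I in closed_proper_right_ideals mul) I.
Proof.
have [m0 [m0' [mBl [mBr [mDl [mDr mZr]]]]]] := @mul_lemmas K V mul hA.
case: (hA) => massoc _ _ nmul.
apply/seteqP; split.
  move=> x [J [le [r [dir ai]]]]; split => //; case => I [[I0 ID IZ IM] [cI pI]] Ix.
  move/eqP: pI; apply; apply/seteqP; split => // y _.
  apply: (closed_approx cI) => eps e0.
  have [j0 Hj] := (ai y).1 eps e0.
  exists (mul (mul x (r j0)) y); split; first by apply: (IM); apply: (IM).
  by rewrite distrC; apply: Hj; case: dir => dr _ _ _; apply: dr.
move=> x [_ nI].
case: (happ) => J [le [e [dir ai]]].
pose Ix := [set y | forall eps : K, 0 < eps -> exists a, `|y - mul x a| < eps].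
have Ixx : Ix x.
  move=> eps e0; have [j0 Hj] := (ai x).2 eps e0.
  by exists (e j0); rewrite distrC; apply: Hj; case: dir => dr _ _ _; apply: dr.
have IxT : Ix = setT.
  apply: contra_notP nI => /eqP pI; exists Ix => //; split; last split => //.
  - split.
    + by move=> eps e0; exists 0; rewrite m0' subrr normr0.
    + move=> y1 y2 h1 h2 eps e0.
      have [a1 h1'] := h1 _ (half_gt0 e0); have [a2 h2'] := h2 _ (half_gt0 e0).
      exists (a1 + a2); rewrite mDr.
      have -> : y1 + y2 - (mul x a1 + mul x a2) = (y1 - mul x a1) + (y2 - mul x a2).
        by rewrite opprD addrACA.
      exact: le_lt_trans (ler_normD _ _) (halves h1' h2').
    + move=> c y h eps e0.
      have [a h'] := h (eps / (`|c| + 1)) (divr_gt0 e0 (ltr_wpDl (normr_ge0 _) ltr01)).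
      exists (c *: a); rewrite mZr -scalerBr normrZ mulrC.
      exact: small_bnd.
    + move=> y b h eps e0.
      have [a h'] := h (eps / (`|b| + 1)) (divr_gt0 e0 (ltr_wpDl (normr_ge0 _) ltr01)).
      exists (mul a b); rewrite massoc -mBl.
      exact: le_lt_trans (nmul _ _) (small_bnd _ _ h').
  - apply: approx_closed => y h eps e0.
    have [z [Iz yz]] := h _ (half_gt0 e0).
    have [a za] := Iz _ (half_gt0 e0).
    exists a.
    have -> : y - mul x a = (y - z) + (z - mul x a) by rewrite addrA subrK.
    exact: le_lt_trans (ler_normD _ _) (halves yz za).
have /choice [r Hr] : forall p : J * {posnum K},
    exists a, `|e p.1 - mul x a| < p.2%:num.
  move=> p; have : Ix (e p.1) by rewrite IxT.
  by move/(_ _ (gt0 p.2)).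
pose le' := fun p q : J * {posnum K} => le p.1 q.1 /\ q.2%:num <= p.2%:num.
case: dir => dref dtr [j1] dub.
exists (J * {posnum K})%type, le', r; split.
  split.
  - by move=> p; split; [apply: dref | exact: lexx].
  - move=> p q s [h1 h2] [h3 h4]; split; first exact: dtr h1 h3.
    exact: le_trans h4 h2.
  - exact: (inhabits (j1, 1%:pos)).
  - move=> [i1 d1] [i2 d2]; have [k [k1 k2]] := dub i1 i2.
    exists (k, (Num.min d1%:num d2%:num)%:pos); split; split => //=;
      by rewrite num_ge_min lexx ?orbT.
move=> y; split.
  move=> eps e0.
  have [j0 Hj] := (ai y).1 _ (half_gt0 e0).
  have d0p : 0 < eps / 2 / (`|y| + 1).
    by rewrite divr_gt0 ?half_gt0 // ltr_wpDl.
  exists (j0, PosNum d0p) => -[j d] [/= lej dd].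
  have -> : mul (mul x (r (j, d))) y - y
      = mul (mul x (r (j, d)) - e j) y + (mul (e j) y - y).
    by rewrite mBl addrA subrK.
  apply: le_lt_trans (ler_normD _ _) (halves _ (Hj _ lej)).
  apply: le_lt_trans (nmul _ _) _.
  apply: small_bnd => //; rewrite distrC.
  exact: lt_le_trans (Hr (j, d)) dd.
move=> eps e0.
have [j0 Hj] := (ai y).2 _ (half_gt0 e0).
have d0p : 0 < eps / 2 / (`|y| + 1).
  by rewrite divr_gt0 ?half_gt0 // ltr_wpDl.
exists (j0, PosNum d0p) => -[j d] [/= lej dd].
have -> : mul y (mul x (r (j, d))) - y
    = mul y (mul x (r (j, d)) - e j) + (mul y (e j) - y).
  by rewrite mBr addrA subrK.
apply: le_lt_trans (ler_normD _ _) (halves _ (Hj _ lej)).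
apply: le_lt_trans (nmul _ _) _.
rewrite mulrC; apply: small_bnd => //; rewrite distrC.
exact: lt_le_trans (Hr (j, d)) dd.
Qed.
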